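(* Let $(a_{n,i})_{n\ge1,1\le i\le n}$ be a deterministic array with $\sum_{i=1}^n|a_{n,i}|^2\le\frac{4}{n}$ for all $n$, and let $\gamma>0$. Let $V_1,V_2,\ldots$ be independent random variables with $V_i\sim\mathbb{P}_{V_i}$. Then $$\lim_{n\to\infty}\ \sup_{\mathbb{P}_{V_1},\ldots,\mathbb{P}_{V_n}\in\mathcal{D}_{1+\gamma}}\mathbb{E}\Bigl[\Bigl|\sum_{i=1}^n a_{n,i}\bigl(V_i-\mathbb{E}[V_i]\bigr)\Bigr|\Bigr]=0.$$
   Context: For $s>0$, $\mathcal{D}_s$ is the class of distributions of $\xi$ with $\mathbb{E}[\xi]=0$ and $1\le\mathbb{E}[|\xi|^s]\le2$. *)

(* Defs.v *)
From HB Require Import structures.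
From mathcomp Require Import all_boot all_order all_algebra.
From mathcomp Require Import all_classical all_reals all_analysis.
Set Implicit Arguments. Unset Strict Implicit. Unset Printing Implicit Defensive.
Import Order.TTheory GRing.Theory Num.Theory.
Local Open Scope classical_set_scope.
Local Open Scope ring_scope.

Definition in_Ds (R : realType) (s : R) (mu : probability R R) : Prop :=
  mu.-integrable [set: R] (fun x => x%:E) /\
  (\int[mu]_x x%:E = 0)%E /\
  (1%:E <= \int[mu]_x (`|x| `^ s)%:E <= 2%:E)%E.

Definition mutually_independent d (T : measurableType d) (R : realType)
  (P : probability T R) (n : nat) (V : 'I_n -> {RV P >-> R}) : Prop :=
  forall B : 'I_n -> set R, (forall i, measurable (B i)) ->
    P (\bigcap_(i in [set: 'I_n]) (V i @^-1` B i)) =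
    (\prod_(i < n) P (V i @^-1` B i))%E.

(* Main.v *)
Require Import Defs.
From HB Require Import structures.
From mathcomp Require Import all_boot all_order all_algebra.
From mathcomp Require Import all_classical all_reals all_analysis.
From mathcomp Require Import measurable_realfun.
From mathcomp Require Import zify ring lra.
Set Implicit Arguments. Unset Strict Implicit.
Import Order.TTheory GRing.Theory Num.Theory.
Local Open Scope classical_set_scope.
Local Open Scope ring_scope.
Lemma int_comb d (T : measurableType d) (R : realType) (P : probability T R)
  (I : finType) (F : I -> set T) (c : I -> R) :
  (forall k, measurable (F k)) ->
  (\int[P]_w (\sum_(k : I) c k * \1_(F k) w)%:E =
   (\sum_(k : I) c k * fine (P (F k)))%:E)%E.
Proof.
move=> mF.
have intk : forall k, P.-integrable [set: T] (fun w => (c k * \1_(F k) w)%:E).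
  move=> k.
  rewrite (_ : (fun w => _) = (fun w => (c k)%:E * (\1_(F k) w)%:E)%E); last first.
    by apply/funext => w; rewrite EFinM.
  by apply: integrableZl => //; exact: integrable_indic.
under eq_integral do rewrite -sumEFin.
rewrite integral_sum // -sumEFin; apply: eq_bigr => k _.
under eq_integral do rewrite EFinM.
rewrite integralZl //; last exact: (@integrable_indic _ _ _ P).
rewrite integral_indic // setIT EFinM fineK //.
exact: fin_num_measure.
Qed.

Lemma int_comb_integrable d (T : measurableType d) (R : realType) (P : probability T R)
  (I : finType) (F : I -> set T) (c : I -> R) :
  (forall k, measurable (F k)) ->
  P.-integrable [set: T] (fun w => (\sum_(k : I) c k * \1_(F k) w)%:E).
Proof.
move=> mF.
rewrite (_ : (fun w => _) = (fun w => \sum_(k : I) (c k * \1_(F k) w)%:E)%E); last first.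
  by apply/funext => w; rewrite sumEFin.
apply: integrable_sum => // k _.
rewrite (_ : (fun w => _) = (fun w => (c k)%:E * (\1_(F k) w)%:E)%E); last first.
  by apply/funext => w; rewrite EFinM.
by apply: integrableZl => //; exact: integrable_indic.
Qed.

Lemma pair_indep d (T : measurableType d) (R : realType) (P : probability T R)
  (n : nat) (V : 'I_n -> {RV P >-> R}) (i j : 'I_n) (S U : set R) :
  mutually_independent V -> i != j -> measurable S -> measurable U ->
  P (V i @^-1` S `&` V j @^-1` U) = (P (V i @^-1` S) * P (V j @^-1` U))%E.
Proof.
move=> ind ij mS mU.
pose B := fun k : 'I_n => if k == i then S else if k == j then U else setT.
have mB : forall k, measurable (B k).
  by move=> k; rewrite /B; case: ifP => _ //; case: ifP.
have := ind B mB.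
have -> : \bigcap_(k in [set: 'I_n]) (V k @^-1` B k) = V i @^-1` S `&` V j @^-1` U.
  apply/seteqP; split => w /=.
    move=> H; split.
      by have := H i I; rewrite /B eqxx.
    by have := H j I; rewrite /B eqxx eq_sym (negbTE ij).
  move=> [Hi Hj] k _; rewrite /B.
  by case: ifP => [/eqP -> //|_]; case: ifP => [/eqP -> //|_].
move=> ->.
rewrite (bigD1 i) //= (bigD1 j) /=; last by rewrite eq_sym.
rewrite big1 ?mule1.
  by rewrite /B eqxx eq_sym (negbTE ij) eqxx.
move=> k /andP[ki kj]; rewrite /B (negbTE ki) (negbTE kj) preimage_setT.
exact: probability_setT.
Qed.

Lemma decomp (R : realType) (K : nat) (h : R -> 'I_K) (g : 'I_K -> R) (x : R) :
  g (h x) = \sum_(k < K) g k * \1_(h @^-1` [set k]) x.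
Proof.
rewrite (bigD1 (h x)) //= big1 ?addr0.
  by rewrite indicE mem_set ?mulr1.
move=> k hk; rewrite indicE memNset ?mulr0 //=.
by move=> e; move: hk; rewrite e eqxx.
Qed.

Lemma prod_exp d (T : measurableType d) (R : realType) (P : probability T R)
  (n : nat) (V : 'I_n -> {RV P >-> R}) (i j : 'I_n) (K : nat) (h : R -> 'I_K)
  (g1 g2 : 'I_K -> R) :
  mutually_independent V -> i != j -> (forall k, measurable (h @^-1` [set k])) ->
  (\int[P]_w (g1 (h (V i w)) * g2 (h (V j w)))%:E =
  \int[P]_w (g1 (h (V i w)))%:E * \int[P]_w (g2 (h (V j w)))%:E)%E.
Proof.
move=> ind ij mh.
pose A k := V i @^-1` (h @^-1` [set k]).
pose B k := V j @^-1` (h @^-1` [set k]).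
have mA : forall k, measurable (A k) by move=> k; exact: measurable_funPTI.
have mB : forall k, measurable (B k) by move=> k; exact: measurable_funPTI.
have dA : forall (g : 'I_K -> R) w, g (h (V i w)) = \sum_(k < K) g k * \1_(A k) w.
  by move=> g w; rewrite decomp.
have dB : forall (g : 'I_K -> R) w, g (h (V j w)) = \sum_(k < K) g k * \1_(B k) w.
  by move=> g w; rewrite decomp.
have iI : forall (X Y : set T) w, \1_X w * \1_Y w = \1_(X `&` Y) w :> R.
  by move=> X Y w; rewrite indicI.
under eq_integral => w _.
  rewrite dA dB big_distrlr /= pair_bigA /=.
  under eq_bigr => p _ do rewrite mulrACA iI.
  over.
rewrite (@int_comb _ _ _ P _ (fun p : 'I_K * 'I_K => A p.1 `&` B p.2)); last first.
  by move=> p; exact: measurableI.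
under eq_integral do rewrite dA.
rewrite int_comb //.
under eq_integral do rewrite dB.
rewrite int_comb // -EFinM; congr (_%:E).
rewrite big_distrlr /= pair_bigA /=; apply: eq_bigr => p _.
rewrite (@pair_indep _ _ _ P _ V i j _ _ ind ij (mh p.1) (mh p.2)).
rewrite fineM ?fin_num_measure //; [by rewrite mulrACA | exact: mA | exact: mB].
Qed.
Unset Implicit Arguments.
Definition zc {R : realType} (dl : R) (K0 : nat) (x : R) : int :=
  Num.max (- (K0%:Z)) (Num.min (Num.floor (x / dl)) K0%:Z).
Definition hq {R : realType} (dl : R) (K0 : nat) (x : R) : 'I_(K0 + K0).+1 :=
  inord (absz (zc dl K0 x + K0%:Z)).
Definition cq {R : realType} (dl : R) (K0 : nat) (k : 'I_(K0 + K0).+1) : R :=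
  dl * ((k : nat)%:R - K0%:R).
Definition qz {R : realType} (dl : R) (K0 : nat) (x : R) : R :=
  dl * (zc dl K0 x)%:~R.

Lemma zc_bound {R : realType} (dl : R) K0 x :
  (- (K0%:Z) <= zc dl K0 x <= K0%:Z)%R.
Proof. rewrite /zc; move: (Num.floor _) => z; lia. Qed.

Lemma q_hq {R : realType} (dl : R) K0 x : qz dl K0 x = cq dl K0 (hq dl K0 x).
Proof.
rewrite /qz /cq /hq inordK; last first.
  have := zc_bound dl K0 x; lia.
have h0 : (0 <= zc dl K0 x + K0%:Z)%R by have := zc_bound dl K0 x; lia.
rewrite natr_absz ger0_norm // rmorphD /=; congr (_ * _).
by rewrite -[(K0%:R : R)]/((K0%:Z)%:~R) addrK.
Qed.

Lemma cq_inj {R : realType} (dl : R) K0 : dl != 0 -> injective (cq dl K0).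
Proof.
move=> dl0 k l; rewrite /cq => /(mulfI dl0) /addIr /eqP.
by rewrite eqr_nat => /eqP kl; apply: val_inj.
Qed.

Lemma qz_nondecr {R : realType} (dl : R) K0 : 0 < dl -> nondecreasing_fun (qz dl K0).
Proof.
move=> dl0 x y xy; rewrite /qz ler_pM2l // ler_int /zc.
have : (Num.floor (x / dl) <= Num.floor (y / dl))%R.
  by apply: le_floor; rewrite ler_pM2r // invr_gt0.
lia.
Qed.

Lemma hq_meas {R : realType} (dl : R) K0 : 0 < dl ->
  forall k, measurable (hq dl K0 @^-1` [set k]).
Proof.
move=> dl0 k.
have -> : hq dl K0 @^-1` [set k] = qz dl K0 @^-1` [set cq dl K0 k].
  apply/seteqP; split => x /=; rewrite q_hq; first by move=> ->.
  by move/cq_inj; apply; rewrite gt_eqF.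
have mq : measurable_fun setT (qz dl K0).
  by apply: measurable_realfun.nondecreasing_measurable => //; exact: qz_nondecr.
by have := mq measurableT _ (measurable_set1 (cq dl K0 k)); rewrite setTI.
Qed.

Lemma qz_bound {R : realType} (dl : R) K0 x : 0 < dl -> `|qz dl K0 x| <= dl * K0%:R.
Proof.
move=> dl0; rewrite /qz normrM gtr0_norm // ler_pM2l //.
have := zc_bound dl K0 x => /andP[h1 h2].
rewrite -[(K0%:R : R)]/((K0%:Z)%:~R) ler_norml -rmorphN /= !ler_int h1 h2 //.
Qed.

Lemma tail_pow {R : realType} (g M x : R) : 0 < g -> 0 < M -> M <= `|x| ->
  `|x| <= `|x| `^ (1 + g) / M `^ g.
Proof.
move=> g0 M0 Mx.
have x0 : 0 < `|x| by apply: lt_le_trans Mx.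
have Mg : 0 < M `^ g by rewrite powR_gt0.
rewrite ler_pdivlMr // powRD; last by rewrite (gt_eqF x0) implybT.
rewrite powRr1 ?normr_ge0 // ler_pM2l //.
by apply: ge0_ler_powR => //; [exact: ltW| rewrite nnegrE ltW].
Qed.

Lemma zc_lo {R : realType} (dl : R) K0 x :
  (Num.floor (x / dl) < - (K0%:Z))%R -> zc dl K0 x = - (K0%:Z).
Proof. rewrite /zc; move: (Num.floor _) => z; lia. Qed.
Lemma zc_hi {R : realType} (dl : R) K0 x :
  (K0%:Z < Num.floor (x / dl))%R -> zc dl K0 x = K0%:Z.
Proof. rewrite /zc; move: (Num.floor _) => z; lia. Qed.
Lemma zc_mid {R : realType} (dl : R) K0 x :
  ~~ (Num.floor (x / dl) < - (K0%:Z))%R -> ~~ (K0%:Z < Num.floor (x / dl))%R ->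
  zc dl K0 x = Num.floor (x / dl).
Proof. rewrite /zc; move: (Num.floor _) => z; lia. Qed.

Lemma qz_err {R : realType} (dl g : R) K0 x : 0 < dl -> (0 < K0)%N -> 0 < g ->
  `|x - qz dl K0 x| <= dl + `|x| `^ (1 + g) / (dl * K0%:R) `^ g.
Proof.
move=> dl0 K00 g0.
set M := dl * K0%:R.
have M0 : 0 < M by rewrite /M mulr_gt0 // ltr0n.
have tl : M <= `|x| -> `|x| <= `|x| `^ (1 + g) / M `^ g.
  by move=> h; exact: tail_pow.
have pos : 0 <= `|x| `^ (1 + g) / M `^ g by rewrite divr_ge0 // powR_ge0.
have eK : ((- (K0%:Z))%:~R : R) = - K0%:R by rewrite mulrNz.
have eK' : (((K0%:Z))%:~R : R) = K0%:R by [].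
have := floor_itv (x / dl); set z := Num.floor (x / dl) => /andP[z1 z2].
have xe : x = dl * (x / dl) by rewrite mulrC divfK // gt_eqF.
rewrite /qz.
case: (boolP (z < - (K0%:Z))) => zlo.
  rewrite zc_lo //.
  have hx : x <= - M.
    have : (z + 1)%:~R <= (- (K0%:Z))%:~R :> R by rewrite ler_int; lia.
    rewrite eK => h.
    have : x / dl <= - K0%:R by apply: (le_trans (ltW z2)).
    by rewrite ler_pdivrMr // /M; lra.
  have : `|x| <= `|x| `^ (1 + g) / M `^ g by apply: tl; rewrite ler0_norm; lra.
  rewrite eK mulrN -/M.
  rewrite ler0_norm; last by lra.
  rewrite ler0_norm; lra.
case: (boolP (K0%:Z < z)) => zhi.
  rewrite zc_hi //.
  have hx : M <= x.
    have : (K0%:Z)%:~R <= z%:~R :> R by rewrite ler_int; lia.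
    rewrite eK' => h.
    have : K0%:R <= x / dl by apply: (le_trans h).
    by rewrite ler_pdivlMr // /M; lra.
  have : `|x| <= `|x| `^ (1 + g) / M `^ g by apply: tl; rewrite ger0_norm; lra.
  rewrite eK' -/M.
  rewrite ger0_norm; last by lra.
  rewrite ger0_norm; lra.
rewrite zc_mid // -/z.
rewrite {1}xe -mulrBr normrM gtr0_norm //.
have : `|x / dl - z%:~R| <= 1.
  rewrite ger0_norm; last by lra.
  by move: z2; rewrite intrD /=; lra.
move=> h; apply: (le_trans (y := dl)); last by lra.
by rewrite -[X in _ <= X]mulr1 ler_pM2l.
Qed.
Set Implicit Arguments.
Lemma rv_integrable d (T : measurableType d) (R : realType) (P : probability T R)
  (X : {RV P >-> R}) (s : R) :
  in_Ds s (distribution P X) -> P.-integrable [set: T] (EFin \o X).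
Proof.
move=> [iX _].
apply/integrableP; split.
  by apply/measurable_EFinP; exact: measurable_funP.
have mf : measurable_fun [set: R] (fun y : R => `|y%:E|%E).
  by apply: measurableT_comp => //; exact/measurable_EFinP.
have := @ge0_integral_distribution _ _ _ _ R P X (fun y : R => `|y%:E|%E) mf
  (fun y => abse_ge0 _).
move=> <-.
by move/integrableP: iX => [].
Qed.

Lemma rv_mean0 d (T : measurableType d) (R : realType) (P : probability T R)
  (X : {RV P >-> R}) (s : R) :
  in_Ds s (distribution P X) -> ('E_P[X] = 0)%E.
Proof.
move=> H; have iX := rv_integrable H.
move: H => [_ [m0 _]].
rewrite expectation_def.
have mE : measurable_fun [set: R] (@EFin R) by exact: EFin_measurable.
have := @integral_distribution _ _ _ _ R P X EFin mE iX.
by move=> <-.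
Qed.

Lemma rv_mom d (T : measurableType d) (R : realType) (P : probability T R)
  (X : {RV P >-> R}) (s : R) :
  in_Ds s (distribution P X) -> (\int[P]_w (`|X w| `^ s)%:E <= 2%:E)%E.
Proof.
move=> [_ [_ /andP[_ h2]]].
have mf : measurable_fun [set: R] (fun y : R => (`|y| `^ s)%:E).
  apply/measurable_EFinP.
  have := measurableT_comp (measurable_powR s) (@normr_measurable R setT).
  by apply: eq_measurable_fun => y _.
have := @ge0_integral_distribution _ _ _ _ R P X (fun y : R => (`|y| `^ s)%:E) mf.
move=> <- //.
Qed.

Lemma qz_meas (R : realType) (dl : R) K0 : 0 < dl -> measurable_fun setT (qz dl K0).
Proof.
by move=> dl0; apply: measurable_realfun.nondecreasing_measurable => //; exact: qz_nondecr.
Qed.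

Lemma rv_b d (T : measurableType d) (R : realType) (P : probability T R)
  (X : {RV P >-> R}) (s Mg dl : R) :
  in_Ds s (distribution P X) -> 0 < Mg -> 0 <= dl ->
  (\int[P]_w (dl + `|X w| `^ s / Mg)%:E <= (dl + 2 / Mg)%:E)%E.
Proof.
move=> H Mg0 dl0.
have mp : measurable_fun setT (fun w => (`|X w| `^ s)%:E).
  apply/measurable_EFinP.
  have := measurableT_comp (measurable_powR s)
    (measurableT_comp (@normr_measurable R setT) (@measurable_funP _ _ _ _ setT X)).
  by apply: eq_measurable_fun => y _.
under eq_integral do rewrite EFinD EFinM.
rewrite ge0_integralD //; last 2 first.
- by move=> w _; rewrite -EFinM lee_fin mulr_ge0 ?powR_ge0 // invr_ge0 ltW.
- by apply: emeasurable_funM => //; exact: measurable_cst.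
rewrite integral_cst //.
set u := (X in (dl%:E * X)%E); have -> : u = 1%E by exact: probability_setT.
rewrite mule1.
have f0 : forall w, [set: T] w -> (0 <= (`|X w| `^ s)%:E)%E.
  by move=> w _; rewrite lee_fin powR_ge0.
have k0 : (0 <= (Mg^-1)%:E)%E by rewrite lee_fin invr_ge0 ltW.
rewrite (ge0_integralZr _ _ mp f0 k0).
rewrite EFinD leeD2l // EFinM lee_wpmul2r //; first exact: rv_mom H.
exact: measurableT.
Qed.

Lemma bnd_integrable d (T : measurableType d) (R : realType) (P : probability T R)
  (f : T -> R) (B : R) :
  measurable_fun setT f -> (forall w, `|f w| <= B) -> P.-integrable setT (EFin \o f).
Proof.
move=> mf fB.
apply: (le_integrable _ _ _ (finite_measure_integrable_cst P B measurableT)) => //.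
  exact/measurable_EFinP.
move=> w _ /=; rewrite lee_fin.
by apply: (le_trans (fB w)); exact: ler_norm.
Qed.

Lemma rv_m d (T : measurableType d) (R : realType) (P : probability T R)
  (X : {RV P >-> R}) (dl g : R) (K0 : nat) :
  0 < dl -> (0 < K0)%N -> 0 < g -> in_Ds (1 + g) (distribution P X) ->
  `|fine (\int[P]_w (qz dl K0 (X w))%:E)| <= dl + 2 / (dl * K0%:R) `^ g.
Proof.
move=> dl0 K00 g0 H.
have Mg0 : 0 < (dl * K0%:R) `^ g by rewrite powR_gt0 // mulr_gt0 // ltr0n.
have mQ : measurable_fun setT (fun w => qz dl K0 (X w)).
  exact: (measurableT_comp (qz_meas K0 dl0) (@measurable_funP _ _ _ _ setT X)).
have iQ : P.-integrable setT (EFin \o (fun w => qz dl K0 (X w))).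
  apply: (@bnd_integrable _ _ _ P _ (dl * K0%:R)) => // w.
  exact: qz_bound.
have iX := rv_integrable H.
have e0 : (\int[P]_w (X w)%:E = 0)%E by rewrite -expectation_def; exact: rv_mean0 H.
have fI : (\int[P]_w (qz dl K0 (X w))%:E)%E \is a fin_num.
  exact: integrable_fin_num iQ.
rewrite -lee_fin -abse_EFin fineK //.
have -> : (\int[P]_w (qz dl K0 (X w))%:E =
           \int[P]_w ((qz dl K0 (X w))%:E - (X w)%:E))%E.
  by rewrite (integralB _ iQ iX) // e0 sube0.
apply: le_trans; first apply: le_abse_integral => //.
  apply: emeasurable_funB; first exact/measurable_EFinP.
  by apply/measurable_EFinP; exact: measurable_funP.
apply: le_trans; last exact: (rv_b H Mg0 (ltW dl0)).
apply: ge0_le_integral => //.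
- apply: measurableT_comp => //; apply: emeasurable_funB.
    exact/measurable_EFinP.
  by apply/measurable_EFinP; exact: measurable_funP.
- apply/measurable_EFinP.
  apply: measurable_funD => //; apply: measurable_funM => //.
  have := measurableT_comp (measurable_powR (1 + g))
    (measurableT_comp (@normr_measurable R setT) (@measurable_funP _ _ _ _ setT X)).
  by apply: eq_measurable_fun => y _.
- move=> w _; rewrite -EFinB abse_EFin lee_fin distrC.
  exact: qz_err.
Qed.

Lemma var_bound d (T : measurableType d) (R : realType) (P : probability T R)
  (n : nat) (V : 'I_n -> {RV P >-> R}) (a : 'I_n -> R) (dl : R) (K0 : nat)
  (m : 'I_n -> R) (Bm : R) :
  mutually_independent V -> 0 < dl ->
  (forall i, \int[P]_w (qz dl K0 (V i w) - m i)%:E = 0)%E ->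
  (forall i, `|m i| <= Bm) ->
  (\int[P]_w ((\sum_(i < n) a i * (qz dl K0 (V i w) - m i)) ^+ 2)%:E <=
    ((\sum_(i < n) a i ^+ 2) * (dl * K0%:R + Bm) ^+ 2)%:E)%E.
Proof.
move=> ind dl0 mean0 mB.
set B := dl * K0%:R + Bm.
pose Y i w := qz dl K0 (V i w) - m i.
pose g i (k : 'I_(K0 + K0).+1) := cq dl K0 k - m i.
have Yg : forall i w, Y i w = g i (hq dl K0 (V i w)).
  by move=> i w; rewrite /Y /g q_hq.
have YB : forall i w, `|Y i w| <= B.
  move=> i w; rewrite /Y /B; apply: (le_trans (ler_normB _ _)).
  by rewrite lerD // qz_bound.
have mY : forall i, measurable_fun setT (Y i).
  move=> i; apply: measurable_funB => //.
  exact: (measurableT_comp (qz_meas K0 dl0) (@measurable_funP _ _ _ _ setT (V i))).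
pose Z (p : 'I_n * 'I_n) w := Y p.1 w * Y p.2 w.
have iZ : forall p, P.-integrable setT (EFin \o Z p).
  move=> p; apply: (@bnd_integrable _ _ _ P _ (B * B)).
    exact: measurable_funM.
  move=> w; rewrite /Z normrM; apply: ler_pM => //.
pose e p := fine (\int[P]_w (Z p w)%:E).
have eE : forall p, (\int[P]_w (Z p w)%:E)%E = (e p)%:E.
  by move=> p; rewrite /e fineK //; exact: integrable_fin_num (iZ p).
have e0 : forall p, p.1 != p.2 -> e p = 0.
  move=> p hp; apply/eqP; rewrite -(@eqe R) -eE /Z.
  under eq_integral do rewrite !Yg.
  rewrite prod_exp //; last exact: hq_meas.
  under eq_integral do rewrite -Yg.
  by rewrite mean0 mul0e.
have eB : forall i, e (i, i) <= B ^+ 2.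
  move=> i; rewrite -lee_fin -eE.
  have := @le_integral _ _ _ P setT measurableT (EFin \o Z (i, i)) (EFin \o cst (B ^+ 2))
    (iZ (i, i)) (finite_measure_integrable_cst P _ measurableT).
  move=> h; apply: le_trans; first apply: h.
    move=> w _ /=; rewrite lee_fin /Z.
    apply: (le_trans (ler_norm _)); rewrite normrM expr2.
    by apply: ler_pM => //; exact: YB.
  rewrite /= integral_cst //.
  set u := (X in ((B ^+ 2)%:E * X)%E); have -> : u = 1%E by exact: probability_setT.
  by rewrite mule1.
have expand : forall w, (\sum_(i < n) a i * Y i w) ^+ 2 =
    \sum_(p : 'I_n * 'I_n) (a p.1 * a p.2) * Z p w.
  move=> w; rewrite expr2 big_distrlr /= pair_bigA /=.
  by apply: eq_bigr => p _; rewrite /Z mulrACA.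
under eq_integral do rewrite expand -sumEFin.
rewrite integral_sum //; last first.
  move=> p; rewrite (_ : (fun w => _) = (fun w => (a p.1 * a p.2)%:E * (Z p w)%:E)%E).
    by apply: integrableZl => //; exact: iZ.
  by apply/funext => w; rewrite EFinM.
have iP : forall p : 'I_n * 'I_n,
    (\int[P]_w (a p.1 * a p.2 * Z p w)%:E)%E = (a p.1 * a p.2 * e p)%:E.
  move=> p; under eq_integral do rewrite EFinM.
  rewrite integralZl //; last exact: iZ.
  by rewrite eE -EFinM.
under eq_bigr do rewrite iP.
rewrite sumEFin lee_fin.
have -> : \sum_(p : 'I_n * 'I_n) a p.1 * a p.2 * e p =
    \sum_(i < n) \sum_(j < n) a i * a j * e (i, j).
  by rewrite pair_bigA; apply: eq_bigr => -[i j].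
rewrite mulr_suml.
apply: ler_sum => i _.
rewrite (bigD1 i) //= big1 ?addr0.
  by rewrite -expr2 ler_wpM2l ?sqr_ge0 // eB.
by move=> j ji; rewrite e0 ?mulr0 //= eq_sym.
Qed.

Lemma amgm (R : realFieldType) (x c : R) : 0 < c -> `|x| <= x ^+ 2 / (2 * c) + c / 2.
Proof.
move=> c0; rewrite -(real_normK (num_real x)).
set y := `|x|.
have -> : y ^+ 2 / (2 * c) + c / 2 = y + (y - c) ^+ 2 / (2 * c).
  by field; rewrite gt_eqF.
by rewrite lerDl divr_ge0 ?sqr_ge0 // mulr_ge0 // ltW.
Qed.

Lemma sumabs (R : realFieldType) (n : nat) (a : 'I_n -> R) :
  \sum_(i < n) a i ^+ 2 <= 4 / n%:R -> \sum_(i < n) `|a i| <= 2.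
Proof.
case: n a => [|n] a h; first by rewrite big_ord0.
set t : R := n.+1%:R.
have t0 : 0 < t by rewrite ltr0n.
have pt : forall i, `|a i| <= t / 4 * a i ^+ 2 + t^-1.
  move=> i; rewrite -(real_normK (num_real (a i))); set y := `|a i|.
  have -> : t / 4 * y ^+ 2 + t^-1 = y + (t * y - 2) ^+ 2 / (4 * t).
    by field; rewrite gt_eqF.
  by rewrite lerDl divr_ge0 ?sqr_ge0 // mulr_ge0 // ltW.
apply: (le_trans (ler_sum _ (fun i _ => pt i))).
rewrite big_split /= -mulr_sumr sumr_const card_ord.
have -> : t^-1 *+ n.+1 = 1 by rewrite -mulr_natr mulVf // gt_eqF.
have : t / 4 * \sum_(i < n.+1) a i ^+ 2 <= t / 4 * (4 / t).
  by rewrite ler_pM2l // divr_gt0.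
have -> : t / 4 * (4 / t) = 1 by field; rewrite gt_eqF.
lra.
Qed.

Theorem lemmaA22 (R : realType) (a : nat -> nat -> R) (gamma : R) :
  (forall n : nat, \sum_(i < n) a n i ^+ 2 <= 4 / n%:R) ->
  0 < gamma ->
  forall eps : R, 0 < eps -> exists N : nat, forall n : nat, (N <= n)%N ->
    forall (d : measure_display) (T : measurableType d) (P : probability T R)
           (V : 'I_n -> {RV P >-> R}),
      mutually_independent V ->
      (forall i, in_Ds (1 + gamma) (distribution P (V i))) ->
      (\int[P]_w `| \sum_(i < n) a n i * (V i w - fine 'E_P[V i]) |%:E
         <= eps%:E)%E.
Proof.
move=> ha g0 eps e0.
pose c := eps / 4.
pose dl := eps / 16.
have c0 : 0 < c by rewrite divr_gt0.
have dl0 : 0 < dl by rewrite divr_gt0.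
pose Bp := (64 / eps) `^ gamma^-1.
pose K0 := (Num.trunc (Bp / dl)).+1.
have K00 : (0 < K0)%N by [].
pose M := dl * K0%:R.
have M0 : 0 < M by rewrite mulr_gt0 // ltr0n.
have BpM : Bp <= M.
  have := truncnS_gt (Bp / dl); rewrite -/K0 ltr_pdivrMr // => h.
  by rewrite /M mulrC ltW.
pose Mg := M `^ gamma.
have Mg0 : 0 < Mg by rewrite powR_gt0.
have MgB : 64 / eps <= Mg.
  have -> : 64 / eps = Bp `^ gamma.
    rewrite /Bp -powRrM mulVf ?gt_eqF // powRr1 //.
    by rewrite divr_ge0 // ltW.
  by apply: ge0_ler_powR => //; [exact: ltW| rewrite nnegrE powR_ge0| rewrite nnegrE ltW].
pose beta := dl + 2 / Mg.
have beta0 : 0 <= beta by rewrite addr_ge0 ?ltW // divr_gt0.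
pose Q2 := (M + beta) ^+ 2.
have Q20 : 0 < Q2 by rewrite exprn_gt0 // ltr_pwDl.
pose N := (Num.trunc (16 * Q2 / eps ^+ 2)).+1.
exists N => n nN d T P V ind hD.
have nbig : 16 * Q2 / eps ^+ 2 < n%:R.
  apply: (lt_le_trans (truncnS_gt _)); by rewrite ler_nat.
have n0 : 0 < n%:R :> R.
  by apply: le_lt_trans nbig; rewrite divr_ge0 ?sqr_ge0 // mulr_ge0 // ltW.
have hE : forall i, fine 'E_P[V i] = 0.
  by move=> i; rewrite (rv_mean0 (hD i)).
have mV : forall i, measurable_fun setT (fun w => V i w).
  by move=> i; exact: (@measurable_funP _ _ _ _ setT (V i)).
have mQ : forall i, measurable_fun setT (fun w => qz dl K0 (V i w)).
  by move=> i; exact: (measurableT_comp (qz_meas K0 dl0) (mV i)).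
have mVp : forall i, measurable_fun setT (fun w => `|V i w| `^ (1 + gamma)).
  move=> i; have := measurableT_comp (measurable_powR (1 + gamma))
    (measurableT_comp (@normr_measurable R setT) (mV i)).
  by apply: eq_measurable_fun => y _.
have iQ : forall i, P.-integrable setT (EFin \o (fun w => qz dl K0 (V i w))).
  move=> i; apply: (@bnd_integrable _ _ _ P _ (dl * K0%:R)) => // w.
  exact: qz_bound.
pose m i := fine (\int[P]_w (qz dl K0 (V i w))%:E).
have hm : forall i, `|m i| <= beta by move=> i; exact: (rv_m dl0 K00 g0 (hD i)).
have hmean : forall i, (\int[P]_w (qz dl K0 (V i w) - m i)%:E = 0)%E.
  move=> i.
  under eq_integral do rewrite EFinB.
  rewrite (integralB _ (iQ i) (finite_measure_integrable_cst P (m i) measurableT)) //.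
  have -> : (\int[P]_x (EFin \o cst (m i)) x = (m i)%:E)%E.
    rewrite /= integral_cst //.
    set u := (X in ((m i)%:E * X)%E); have -> : u = 1%E by exact: probability_setT.
    by rewrite mule1.
  have fI : (\int[P]_w (qz dl K0 (V i w))%:E)%E \is a fin_num.
    exact: integrable_fin_num (iQ i).
  by rewrite /m fineK ?subee.
pose W w := \sum_(i < n) a n i * (qz dl K0 (V i w) - m i).
pose S w := \sum_(i < n) `|a n i| * (dl + `|V i w| `^ (1 + gamma) / Mg).
pose C := \sum_(i < n) `|a n i| * beta.
pose G w := W w ^+ 2 * (2 * c)^-1 + ((c / 2 + C) + S w).
have mW : measurable_fun setT W.
  apply: measurable_sum => k; apply: measurable_funM => //.
  exact: measurable_funB.
have mS : measurable_fun setT S.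
  apply: measurable_sum => k; apply: measurable_funM => //.
  apply: measurable_funD => //; apply: measurable_funM => //.
have mA : measurable_fun setT (fun w => W w ^+ 2 * (2 * c)^-1).
  by apply: measurable_funM => //; apply: measurable_funM.
have S0 : forall w, 0 <= S w.
  move=> w; apply: sumr_ge0 => k _; apply: mulr_ge0 => //.
  by apply: addr_ge0; [exact: ltW | exact: divr_ge0 (powR_ge0 _ _) (ltW Mg0)].
have C0 : 0 <= C by apply: sumr_ge0 => k _; exact: mulr_ge0.
have A0 : forall w, 0 <= W w ^+ 2 * (2 * c)^-1.
  by move=> w; rewrite mulr_ge0 ?sqr_ge0 // invr_ge0 mulr_ge0 // ltW.
have step1 : (\int[P]_w `| \sum_(i < n) a n i * (V i w - fine 'E_P[V i]) |%:E
    <= \int[P]_w (G w)%:E)%E.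
  apply: ge0_le_integral => //.
  - apply/measurable_EFinP.
    apply: (measurableT_comp (@normr_measurable R setT)).
    apply: measurable_sum => k; apply: measurable_funM => //.
    exact: measurable_funB.
  - apply/measurable_EFinP; apply: measurable_funD => //.
    exact: measurable_funD.
  move=> w _; rewrite lee_fin.
  have e1 : \sum_(i < n) a n i * (V i w - fine 'E_P[V i]) =
      W w + \sum_(i < n) a n i * (V i w - qz dl K0 (V i w)) +
      \sum_(i < n) a n i * m i.
    rewrite /W -!big_split /=; apply: eq_bigr => k _.
    rewrite hE; ring.
  have h1 : `|W w| <= W w ^+ 2 * (2 * c)^-1 + c / 2 by exact: amgm.
  have h2 : `|\sum_(i < n) a n i * (V i w - qz dl K0 (V i w))| <= S w.
    apply: (le_trans (ler_norm_sum _ _ _)); apply: ler_sum => k _.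
    rewrite normrM ler_wpM2l //; exact: qz_err.
  have h3 : `|\sum_(i < n) a n i * m i| <= C.
    apply: (le_trans (ler_norm_sum _ _ _)); apply: ler_sum => k _.
    by rewrite normrM ler_wpM2l.
  rewrite e1 /G.
  apply: (le_trans (ler_normD _ _)).
  have := ler_normD (W w) (\sum_(i < n) a n i * (V i w - qz dl K0 (V i w))).
  lra.
apply: le_trans; first exact: step1.
have IA : (\int[P]_w (W w ^+ 2 * (2 * c)^-1)%:E <=
    ((\sum_(i < n) a n i ^+ 2) * Q2 * (2 * c)^-1)%:E)%E.
  under eq_integral do rewrite EFinM.
  rewrite ge0_integralZr //; last 3 first.
  - by apply/measurable_EFinP; apply: measurable_funM.
  - by move=> w _; rewrite lee_fin sqr_ge0.
  - by rewrite lee_fin invr_ge0 mulr_ge0 // ltW.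
  rewrite EFinM lee_wpmul2r //; first by rewrite lee_fin invr_ge0 mulr_ge0 // ltW.
  rewrite /W /Q2 /M.
  exact: (var_bound _ ind dl0 hmean hm).
have IK : (\int[P]_w (c / 2 + C)%:E = (c / 2 + C)%:E)%E.
  rewrite integral_cst //.
  set u := (X in ((c / 2 + C)%:E * X)%E); have -> : u = 1%E by exact: probability_setT.
  by rewrite mule1.
have IS : (\int[P]_w (S w)%:E <= C%:E)%E.
  rewrite /S; under eq_integral do rewrite -sumEFin.
  rewrite ge0_integral_sum //; last 2 first.
  - move=> k; apply/measurable_EFinP; apply: measurable_funM => //.
    apply: measurable_funD => //; apply: measurable_funM => //.
  - move=> k w _; rewrite lee_fin mulr_ge0 //.
    by apply: addr_ge0; [exact: ltW | exact: divr_ge0 (powR_ge0 _ _) (ltW Mg0)].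
  rewrite /C -sumEFin; apply: lee_sum => k _.
  under eq_integral do rewrite EFinM.
  rewrite ge0_integralZl //; last 2 first.
  - apply/measurable_EFinP.
    apply: measurable_funD => //; apply: measurable_funM => //.
  - by move=> w _; rewrite lee_fin; apply: addr_ge0; [exact: ltW | exact: divr_ge0 (powR_ge0 _ _) (ltW Mg0)].
  rewrite EFinM lee_wpmul2l //.
  exact: (rv_b (hD k) Mg0 (ltW dl0)).
have mAE : measurable_fun setT (fun w => (W w ^+ 2 * (2 * c)^-1)%:E).
  exact/measurable_EFinP.
have mSE : measurable_fun setT (fun w => (S w)%:E) by exact/measurable_EFinP.
have mKE : measurable_fun setT (fun w : T => (c / 2 + C)%:E) by exact: measurable_cst.
have A0E : forall w, setT w -> (0 <= (W w ^+ 2 * (2 * c)^-1)%:E)%E.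
  by move=> w _; rewrite lee_fin.
have S0E : forall w, setT w -> (0 <= (S w)%:E)%E by move=> w _; rewrite lee_fin.
have K0E : forall w : T, setT w -> (0 <= (c / 2 + C)%:E)%E.
  by move=> w _; rewrite lee_fin addr_ge0 // divr_ge0 // ltW.
have KS0E : forall w, setT w -> (0 <= (c / 2 + C)%:E + (S w)%:E)%E.
  by move=> w _; apply: adde_ge0; [exact: (K0E w) | exact: (S0E w)].
have mKSE : measurable_fun setT (fun w => (c / 2 + C)%:E + (S w)%:E)%E.
  exact: emeasurable_funD.
under eq_integral do rewrite /G EFinD EFinD.
rewrite (ge0_integralD P measurableT A0E mAE KS0E mKSE).
rewrite (ge0_integralD P measurableT K0E mKE S0E mSE) IK.
apply: le_trans.
  apply: leeD; first exact: IA.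
  apply: leeD; first exact: lexx.
  exact: IS.
rewrite -!EFinD lee_fin.
have sa := sumabs (ha n).
have hC : C <= 2 * beta by rewrite /C -mulr_suml ler_wpM2r.
have hMg : 8 / Mg <= eps / 8.
  have e8 : eps / 8 * (64 / eps) = 8 by field; rewrite gt_eqF.
  rewrite ler_pdivrMr //; apply: (le_trans (y := eps / 8 * (64 / eps))).
    by rewrite e8.
  by rewrite ler_wpM2l // divr_ge0 // ltW.
have hb : 4 * beta <= eps / 4 + eps / 8.
  rewrite /beta /dl.
  have -> : 4 * (eps / 16 + 2 / Mg) = eps / 4 + 8 / Mg by field; rewrite gt_eqF.
  lra.
pose u := \sum_(i < n) a n i ^+ 2.
have u0 : 0 <= u by apply: sumr_ge0 => k _; exact: sqr_ge0.
have un : u * n%:R <= 4.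
  by have := ha n; rewrite -/u ler_pdivlMr.
have nQ : 16 * Q2 < n%:R * eps ^+ 2.
  by move: nbig; rewrite ltr_pdivrMr // exprn_gt0.
have uQ : u * Q2 <= eps ^+ 2 / 4.
  rewrite ler_pdivlMr //.
  have e20 : 0 <= eps ^+ 2 by exact: sqr_ge0.
  nra.
have -> : u * Q2 * (2 * c)^-1 = u * Q2 * (2 / eps).
  by rewrite /c; congr (_ * _); field; rewrite gt_eqF.
have : u * Q2 * (2 / eps) <= eps ^+ 2 / 4 * (2 / eps).
  by rewrite ler_wpM2r // divr_ge0 // ltW.
have -> : eps ^+ 2 / 4 * (2 / eps) = eps / 2 by field; rewrite gt_eqF.
rewrite /c -/u.
lra.
Qed.
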